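(* Let $A,B\in\mathbb{R}^{n\times n}$, let $\phi,\psi:\mathbb{R}^n\to\mathbb{R}^n$, and let $\Omega$ be a positive diagonal matrix. Assume there are constants $L_1,L_2>0$ with $\|\phi(u)-\phi(v)\|\le L_1\|u-v\|$ and $\|\psi(u)-\psi(v)\|\le L_2\|u-v\|$ for all $u,v\in\mathbb{R}^n$. Let $A+\Omega B=M-N$ with $M$ nonsingular, and set $$\alpha=\|M^{-1}\|,\quad \beta=\|N\|+L_1+L_2\|\Omega\|,\quad \gamma=\|A-\Omega B\|+L_1+L_2\|\Omega\|.$$ Suppose the VNCP has a solution $x^*$. If $$\alpha(\beta+\gamma)<1\quad\text{and}\quad 0<\tau<\frac{2(1-\alpha\beta)}{1-\alpha\beta+\alpha\gamma},$$ then for every initial pair $(x^0,y^0)\in\mathbb{R}^n\times\mathbb{R}^n$ the sequence $\{x^k\}$ generated by the FPI method converges to $x^*$, and $x^*$ is the unique solution of the VNCP.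
   Context: The vertical nonlinear complementarity problem (VNCP) is: find $x\in\mathbb{R}^n$ such that $u(x):=Ax+\phi(x)\ge 0$, $v(x):=Bx+\psi(x)\ge0$ and $u(x)^Tv(x)=0$ (inequalities componentwise), where $\phi,\psi$ act componentwise, i.e. $(\phi(x))_i=\phi(x_i)$, $(\psi(x))_i=\psi(x_i)$ for scalar functions $\phi,\psi$. For a positive diagonal $\Omega$, $x$ solves the VNCP iff $(A+\Omega B)x=|(A-\Omega B)x+\phi(x)-\Omega\psi(x)|-\phi(x)-\Omega\psi(x)$, where $|\cdot|$ is the componentwise absolute value. The FPI method, with splitting $A+\Omega B=M-N$ ($M$ nonsingular) and parameter $\tau>0$, generates from $(x^0,y^0)$: $$x^{k+1}=M^{-1}\big[Nx^k+y^k-\phi(x^k)-\Omega\psi(x^k)\big],\qquad y^{k+1}=(1-\tau)y^k+\tau\,\big|(A-\Omega B)x^{k+1}+\phi(x^{k+1})-\Omega\psi(x^{k+1})\big|.$$ $\|\cdot\|$ denotes the Euclidean vector norm and the induced spectral matrix norm. *)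

(* Defs.v *)
From HB Require Import structures.
From mathcomp Require Import all_boot all_order all_algebra.
From mathcomp Require Import all_classical all_reals all_analysis.
Set Implicit Arguments. Unset Strict Implicit. Unset Printing Implicit Defensive.
Import Order.TTheory GRing.Theory Num.Theory.
Import numFieldNormedType.Exports.
Local Open Scope classical_set_scope.
Local Open Scope ring_scope.

Section Defs.
Variable R : realType.

Definition enorm n (x : 'cV[R]_n) : R := Num.sqrt (\sum_i (x i 0) ^+ 2).

Definition opnorm m n (A : 'M[R]_(m, n)) : R :=
  sup [set enorm (A *m x) | x in [set x : 'cV[R]_n | enorm x <= 1]].

Definition cw n (f : R -> R) (x : 'cV[R]_n) : 'cV[R]_n := map_mx f x.

Definition vabs n (x : 'cV[R]_n) : 'cV[R]_n := map_mx (fun a => `|a|) x.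

Definition vnonneg n (x : 'cV[R]_n) : Prop := forall i, 0 <= x i 0.

Definition vncp_sol n (A B : 'M[R]_n) (phi psi : R -> R) (x : 'cV[R]_n) : Prop :=
  let u := A *m x + cw phi x in
  let v := B *m x + cw psi x in
  vnonneg u /\ vnonneg v /\ (u^T *m v) 0 0 = 0.

Definition fpi_step n (A B Om M N : 'M[R]_n) (phi psi : R -> R) (tau : R)
  (p : 'cV[R]_n * 'cV[R]_n) : 'cV[R]_n * 'cV[R]_n :=
  let x := p.1 in let y := p.2 in
  let x' := invmx M *m (N *m x + y - cw phi x - Om *m cw psi x) in
  let y' := (1 - tau) *: y +
            tau *: vabs ((A - Om *m B) *m x' + cw phi x' - Om *m cw psi x') in
  (x', y').

Definition fpi_seq n (A B Om M N : 'M[R]_n) (phi psi : R -> R) (tau : R)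
  (x0 y0 : 'cV[R]_n) (k : nat) : 'cV[R]_n * 'cV[R]_n :=
  iter k (fpi_step A B Om M N phi psi tau) (x0, y0).

End Defs.

(* Main.v *)
Require Import Defs.
From HB Require Import structures.
From mathcomp Require Import all_boot all_order all_algebra.
From mathcomp Require Import all_classical all_reals all_analysis.
From mathcomp Require Import ring lra.
Import Order.TTheory GRing.Theory Num.Theory.
Import numFieldNormedType.Exports.
Local Open Scope classical_set_scope.
Local Open Scope ring_scope.

Section EN.
Variable R : realType.
Variable n : nat.
Implicit Types x y : 'cV[R]_n.

Lemma enorm_ge0 x : 0 <= enorm x.
Proof. exact: sqrtr_ge0. Qed.

Lemma enorm_sq x : enorm x ^+ 2 = \sum_i x i 0 ^+ 2.
Proof. by rewrite /enorm sqr_sqrtr // sumr_ge0 // => i _; exact: sqr_ge0. Qed.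

Lemma enorm_le x y : (forall i, x i 0 ^+ 2 <= y i 0 ^+ 2) -> enorm x <= enorm y.
Proof. by move=> h; apply: ler_wsqrtr; apply: ler_sum => i _. Qed.

Lemma enormN x : enorm (- x) = enorm x.
Proof. by rewrite /enorm; congr Num.sqrt; apply: eq_bigr => i _; rewrite mxE sqrrN. Qed.

Lemma enormZ c x : enorm (c *: x) = `|c| * enorm x.
Proof.
rewrite /enorm (eq_bigr (fun i => c ^+ 2 * x i 0 ^+ 2)); last first.
  by move=> i _; rewrite mxE exprMn.
by rewrite -mulr_sumr sqrtrM ?sqr_ge0 // sqrtr_sqr.
Qed.

Lemma enorm0 : enorm (0 : 'cV[R]_n) = 0.
Proof. by have := enormZ 0 0; rewrite scale0r normr0 mul0r. Qed.

Lemma coord_le x i : `|x i 0| <= enorm x.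
Proof.
rewrite -sqrtr_sqr; apply: ler_wsqrtr.
rewrite (bigD1 i) //= lerDl sumr_ge0 // => j _; exact: sqr_ge0.
Qed.

Lemma enorm_eq0 x : enorm x = 0 -> x = 0.
Proof.
move=> h; apply/matrixP => i j; rewrite (ord1 j) mxE.
by apply/normr0_eq0/eqP; rewrite eq_le normr_ge0 andbT -h coord_le.
Qed.

Lemma enorm_sum_le x : enorm x <= \sum_i `|x i 0|.
Proof.
have h : \sum_i x i 0 ^+ 2 <= (\sum_i `|x i 0|) ^+ 2 /\ 0 <= \sum_i `|x i 0|.
  apply: (big_ind2 (fun s t => s <= t ^+ 2 /\ 0 <= t)).
  - by rewrite expr0n.
  - move=> a b c d [h1 h2] [h3 h4]; split; last exact: addr_ge0.
    by nra.
  - by move=> i; rewrite real_normK ?num_real //; split.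
rewrite /enorm -(ger0_norm h.2) -sqrtr_sqr; apply: ler_wsqrtr; exact: h.1.
Qed.

Definition dot x y := \sum_i x i 0 * y i 0.

Lemma sum_expand (a b : R) x y :
  \sum_i (b * x i 0 - a * y i 0) ^+ 2 =
  b ^+ 2 * \sum_i x i 0 ^+ 2 - 2 * a * b * dot x y + a ^+ 2 * \sum_i y i 0 ^+ 2.
Proof.
rewrite (eq_bigr (fun i => (b ^+ 2 * x i 0 ^+ 2 + - (2 * a * b * (x i 0 * y i 0)))
   + a ^+ 2 * y i 0 ^+ 2)); last by move=> i _; ring.
by rewrite !big_split /= sumrN -!mulr_sumr.
Qed.

Lemma cauchy_schwarz x y : dot x y <= enorm x * enorm y.
Proof.
set a := enorm x; set b := enorm y.
have ha : 0 <= a := enorm_ge0 x.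
have hb : 0 <= b := enorm_ge0 y.
have h0 : 0 <= \sum_i (b * x i 0 - a * y i 0) ^+ 2.
  by apply: sumr_ge0 => i _; exact: sqr_ge0.
rewrite sum_expand -!enorm_sq -/a -/b in h0.
have [ab0|] := eqVneq (a * b) 0.
  move/eqP: ab0; rewrite mulf_eq0 => /orP [] /eqP h.
    rewrite /dot (eq_bigr (fun _ => 0)) ?big1 // ?h ?mul0r // => i _.
    by rewrite (enorm_eq0 _ h) mxE mul0r.
  rewrite /dot (eq_bigr (fun _ => 0)) ?big1 // ?h ?mulr0 // => i _.
  by rewrite (enorm_eq0 _ h) mxE mulr0.
move=> abn0; have abp : 0 < a * b by rewrite lt0r abn0 mulr_ge0.
nra.
Qed.

Lemma enormD x y : enorm (x + y) <= enorm x + enorm y.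
Proof.
rewrite -(ler_sqr (enorm_ge0 _) (addr_ge0 (enorm_ge0 _) (enorm_ge0 _))) /=.
have e : enorm (x + y) ^+ 2 = enorm x ^+ 2 + 2 * dot x y + enorm y ^+ 2.
  rewrite !enorm_sq /dot (eq_bigr (fun i => (x i 0 ^+ 2 + 2 * (x i 0 * y i 0)) + y i 0 ^+ 2)).
    by rewrite !big_split /= -mulr_sumr.
  by move=> i _; rewrite mxE; ring.
rewrite e; have := cauchy_schwarz x y; nra.
Qed.

Lemma enormB x y : enorm (x - y) <= enorm x + enorm y.
Proof. by rewrite -(enormN y); exact: enormD. Qed.

Lemma enorm_vabs x y : enorm (vabs x - vabs y) <= enorm (x - y).
Proof.
apply: enorm_le => i; rewrite !mxE.
rewrite -[(x i 0 - y i 0) ^+ 2]real_normK ?num_real // -[(_ - `|y i 0|) ^+ 2]real_normK ?num_real //.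
rewrite ler_sqr ?nnegrE //; exact: ler_dist_dist.
Qed.


Lemma opnorm_ub (A : 'M[R]_n) x : enorm x <= 1 -> enorm (A *m x) <= \sum_i \sum_j `|A i j|.
Proof.
move=> hx; apply: le_trans (enorm_sum_le _) _; apply: ler_sum => i _.
rewrite mxE; apply: le_trans (ler_norm_sum _ _ _) _; apply: ler_sum => j _.
rewrite normrM; apply: ler_piMr => //; apply: le_trans (coord_le _ _) hx.
Qed.

Lemma opnorm_hs (A : 'M[R]_n) :
  has_ubound [set enorm (A *m x) | x in [set x : 'cV[R]_n | enorm x <= 1]].
Proof. by exists (\sum_i \sum_j `|A i j|) => _ [x hx <-]; exact: opnorm_ub. Qed.

Lemma opnorm_ge (A : 'M[R]_n) x : enorm x <= 1 -> enorm (A *m x) <= opnorm A.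
Proof. by move=> hx; apply: ub_le_sup (opnorm_hs A) _ _; exists x. Qed.

Lemma opnorm_ge0 (A : 'M[R]_n) : 0 <= opnorm A.
Proof. by have := opnorm_ge A 0; rewrite mulmx0 enorm0; apply; rewrite ler01. Qed.

Lemma opnorm_le (A : 'M[R]_n) x : enorm (A *m x) <= opnorm A * enorm x.
Proof.
have [h0|hn] := eqVneq (enorm x) 0.
  by rewrite h0 mulr0 (enorm_eq0 _ h0) mulmx0 enorm0.
have rp : 0 < enorm x by rewrite lt0r hn enorm_ge0.
have hy : enorm ((enorm x)^-1 *: x) <= 1.
  by rewrite enormZ ger0_norm ?invr_ge0 ?enorm_ge0 // mulVf.
have := opnorm_ge A _ hy; rewrite -scalemxAr enormZ ger0_norm ?invr_ge0 ?enorm_ge0 //.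
by rewrite ler_pdivrMl // mulrC.
Qed.

End EN.
Arguments enorm_ge0 {R n}.
Arguments enorm_sq {R n}.
Arguments enorm_le {R n}.
Arguments enormN {R n}.
Arguments enormZ {R n}.
Arguments enorm0 {R n}.
Arguments coord_le {R n}.
Arguments enorm_eq0 {R n}.
Arguments enorm_sum_le {R n}.
Arguments sum_expand {R n}.
Arguments cauchy_schwarz {R n}.
Arguments enormD {R n}.
Arguments enormB {R n}.
Arguments enorm_vabs {R n}.
Arguments opnorm_ub {R n}.
Arguments opnorm_hs {R n}.
Arguments opnorm_ge {R n}.
Arguments opnorm_ge0 {R n}.
Arguments opnorm_le {R n}.

Lemma my_contraction (R : realType) (a b : nat -> R) (w11 w12 t c : R) :
  (forall k, 0 <= a k) -> (forall k, 0 <= b k) ->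
  0 <= w11 -> 0 <= w12 -> 0 <= t -> 0 <= c ->
  0 < 1 - (t + c * w12) ->
  0 < (1 - w11) * (1 - (t + c * w12)) - w12 * (c * w11) ->
  (forall k, a k.+1 <= w11 * a k + w12 * b k) ->
  (forall k, b k.+1 <= t * b k + c * a k.+1) ->
  exists K rho, 0 <= rho < 1 /\ forall k, a k <= K * rho ^+ k.
Proof.
move=> a0 b0 h11 h12 ht hc h22 hD ha hb.
set w22 := t + c * w12 in h22 hD.
set D := _ - _ in hD.
set rho := 1 - D / 2.
set p := rho - w22.
have hw22 : 0 <= w22 by rewrite /w22; have := mulr_ge0 hc h12; lra.
have hDle : D <= 1 - w22.
  have := mulr_ge0 h12 (mulr_ge0 hc h11).
  have := mulr_ge0 h11 (ltW h22).
  rewrite /D; lra.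
have pp : 0 < p by rewrite /p /rho; lra.
have hf : w12 * (c * w11) <= p * (rho - w11).
  have e : p * (rho - w11) - w12 * (c * w11) = (D / 2) * (w11 + w22) + (D / 2) ^+ 2.
    by rewrite /p /rho /D /w22; field.
  have := mulr_ge0 (ltW (divr_gt0 hD (ltr0Sn _ 1))) (addr_ge0 h11 hw22).
  have := sqr_ge0 (D / 2); lra.
have rho1 : rho < 1 by rewrite /rho; lra.
have rho0 : 0 <= rho by move: pp; rewrite /p; lra.
set V := fun k => p * a k + w12 * b k.
have hV : forall k, V k.+1 <= rho * V k.
  move=> k; rewrite /V.
  have e1 := ha k; have e2 := hb k; have e3 := a0 k; have e4 := b0 k.
  have e5 := a0 k.+1; have e6 := b0 k.+1.
  have s1 : p * a k.+1 + w12 * b k.+1 <= (p + w12 * c) * a k.+1 + w12 * t * b k.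
    nra.
  have s2 : (p + w12 * c) * a k.+1 <= (p + w12 * c) * (w11 * a k + w12 * b k).
    apply: ler_wpM2l => //; nra.
  have s3 : (p + w12 * c) * w11 * a k <= rho * p * a k.
    apply: ler_wpM2r => //; nra.
  have s4 : (p + w12 * c) * w12 + w12 * t = rho * w12 by rewrite /p /w22; ring.
  nra.
have hVk : forall k, V k <= rho ^+ k * V 0.
  elim=> [|k ih]; first by rewrite expr0 mul1r.
  apply: le_trans (hV k) _; rewrite exprS -mulrA; exact: ler_wpM2l.
exists (V 0 / p), rho; split; first by rewrite rho0.
move=> k; have := hVk k; rewrite /V => h.
rewrite mulrAC ler_pdivlMr //.
have := b0 k; have := a0 k; nra.
Qed.

Lemma diag_mul (R : realType) n (Om : 'M[R]_n) (v : 'cV[R]_n) :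
  is_diag_mx Om -> Om *m v = \col_i (Om i i * v i 0).
Proof.
move/is_diag_mxP=> hd; apply/matrixP => i j; rewrite (ord1 j) !mxE.
rewrite (bigD1 i) //= big1 ?addr0 // => k hk; rewrite hd ?mul0r //.
by rewrite eq_sym.
Qed.

Lemma aux_real (R : realType) (a b p q w : R) : 0 <= a + p -> 0 <= b + q ->
  (a + p) * (b + q) = 0 -> 0 <= w ->
  a + w * b = `|a - w * b + p - w * q| - p - w * q.
Proof.
move=> hu hv /eqP; rewrite mulf_eq0 => /orP [] /eqP h hw.
  rewrite ler0_norm; last by have := mulr_ge0 hw hv; nra.
  nra.
rewrite ger0_norm; last by have := mulr_ge0 hw hu; nra.
nra.
Qed.

Lemma sol_fix (R : realType) n (A B Om : 'M[R]_n) (phi psi : R -> R) x :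
  is_diag_mx Om -> (forall i, 0 < Om i i) -> vncp_sol A B phi psi x ->
  (A + Om *m B) *m x =
  vabs ((A - Om *m B) *m x + cw phi x - Om *m cw psi x) - cw phi x - Om *m cw psi x.
Proof.
move=> hd hp [hu [hv huv]].
have hz : forall i, (A *m x + cw phi x) i 0 * (B *m x + cw psi x) i 0 = 0.
  move=> i; move: huv; rewrite !mxE => huv.
  have hnn : forall j, xpredT j -> 0 <= (A *m x + cw phi x)^T 0 j * (B *m x + cw psi x) j 0.
    by move=> j _; rewrite mxE; apply: mulr_ge0; [exact: hu|exact: hv].
  have := psumr_eq0P hnn huv (i:=i) isT.
  by rewrite mxE => hh; move: hh; rewrite !mxE.
rewrite mulmxDl mulmxBl -!mulmxA !(@diag_mul _ _ Om _ hd).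
apply/matrixP => i j; rewrite (ord1 j); have := hz i; have := hu i; have := hv i.
rewrite !mxE => h1 h2 h3.
apply: aux_real => //; exact: ltW.
Qed.

Section Main.
Variables (R : realType) (n : nat) (A B Om M N : 'M[R]_n) (phi psi : R -> R)
  (L1 L2 tau : R).
Hypothesis hd : is_diag_mx Om.
Hypothesis hp : forall i, 0 < Om i i.
Hypothesis hphi : forall u v : 'cV[R]_n, enorm (cw phi u - cw phi v) <= L1 * enorm (u - v).
Hypothesis hpsi : forall u v : 'cV[R]_n, enorm (cw psi u - cw psi v) <= L2 * enorm (u - v).
Hypothesis hsplit : A + Om *m B = M - N.
Hypothesis hM : M \in unitmx.
Hypothesis htau : 0 < tau.

Definition gm (x : 'cV[R]_n) := (A - Om *m B) *m x + cw phi x - Om *m cw psi x.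
Let step := fpi_step A B Om M N phi psi tau.

Lemma fix_step x : vncp_sol A B phi psi x -> step (x, vabs (gm x)) = (x, vabs (gm x)).
Proof.
move=> hs; have h := @sol_fix _ _ A B Om phi psi x hd hp hs; rewrite hsplit mulmxBl in h.
have e : N *m x + vabs (gm x) - cw phi x - Om *m cw psi x = M *m x.
  rewrite -[M *m x](subrK (N *m x)) h /gm.
  by apply/matrixP => i j; rewrite !mxE; ring.
rewrite /step /fpi_step /= e mulKmx //; congr (_, _).
by rewrite -/(gm x) -scalerDl subrK scale1r.
Qed.

Lemma iter_fix (f : 'cV[R]_n * 'cV[R]_n -> 'cV[R]_n * 'cV[R]_n) p k :
  f p = p -> iter k f p = p.
Proof. by move=> h; elim: k => //= k ->. Qed.


Lemma step_fst p : (step p).1 =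
  invmx M *m (N *m p.1 + p.2 - cw phi p.1 - Om *m cw psi p.1).
Proof. by []. Qed.

Lemma step_snd p : (step p).2 = (1 - tau) *: p.2 + tau *: vabs (gm (step p).1).
Proof. by []. Qed.

Lemma est1 xs ys x y : step (xs, ys) = (xs, ys) ->
  enorm ((step (x, y)).1 - xs) <=
  opnorm (invmx M) * ((opnorm N + L1 + L2 * opnorm Om) * enorm (x - xs) + enorm (y - ys)).
Proof.
move=> hf; have hx : xs = (step (xs, ys)).1 by rewrite hf.
set w := N *m (x - xs) + (y - ys) - (cw phi x - cw phi xs) - Om *m (cw psi x - cw psi xs).
have e : (step (x, y)).1 - xs = invmx M *m w.
  rewrite {1}hx !step_fst /= -mulmxBr; congr (_ *m _).
  rewrite /w !mulmxBr; apply/matrixP => i j; rewrite !mxE; ring.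
rewrite e; apply: le_trans (opnorm_le _ _) _; apply: ler_wpM2l; first exact: opnorm_ge0.
have h1 := opnorm_le N (x - xs).
have h2 := hphi x xs.
have h3 := opnorm_le Om (cw psi x - cw psi xs).
have h4 := hpsi x xs.
have h5 : enorm w <= enorm (N *m (x - xs)) + enorm (y - ys) + enorm (cw phi x - cw phi xs)
   + enorm (Om *m (cw psi x - cw psi xs)).
  rewrite /w; apply: le_trans (enormB _ _) _; rewrite lerD2r.
  apply: le_trans (enormB _ _) _; rewrite lerD2r; exact: enormD.
have h6 := opnorm_ge0 Om.
have h7 : opnorm Om * enorm (cw psi x - cw psi xs) <= opnorm Om * (L2 * enorm (x - xs)).
  exact: ler_wpM2l.
nra.
Qed.

Lemma est2 xs ys x y : step (xs, ys) = (xs, ys) ->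
  enorm ((step (x, y)).2 - ys) <=
  `|1 - tau| * enorm (y - ys) +
  tau * ((opnorm (A - Om *m B) + L1 + L2 * opnorm Om) * enorm ((step (x, y)).1 - xs)).
Proof.
move=> hf; have hx : (step (xs, ys)).1 = xs by rewrite hf.
have hy : ys = (1 - tau) *: ys + tau *: vabs (gm xs).
  by rewrite -{1}[ys](congr1 snd hf) step_snd hx.
set x' := (step (x, y)).1.
have e : (step (x, y)).2 - ys = (1 - tau) *: (y - ys) + tau *: (vabs (gm x') - vabs (gm xs)).
  rewrite step_snd -/x' {1}hy /=.
  apply/matrixP => i j; rewrite !mxE; ring.
rewrite e; apply: le_trans (enormD _ _) _; rewrite !enormZ (gtr0_norm htau) lerD2l.
apply: ler_wpM2l; first exact: ltW.
apply: le_trans (enorm_vabs _ _) _.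
have eg : gm x' - gm xs = (A - Om *m B) *m (x' - xs) + (cw phi x' - cw phi xs)
   - Om *m (cw psi x' - cw psi xs).
  rewrite /gm !mulmxBr; apply/matrixP => i j; rewrite !mxE; ring.
rewrite eg.
have h1 := opnorm_le (A - Om *m B) (x' - xs).
have h2 := hphi x' xs.
have h3 := opnorm_le Om (cw psi x' - cw psi xs).
have h4 := hpsi x' xs.
have h6 := opnorm_ge0 Om.
have h7 : opnorm Om * enorm (cw psi x' - cw psi xs) <= opnorm Om * (L2 * enorm (x' - xs)).
  exact: ler_wpM2l.
apply: le_trans (enormB _ _) _.
have := enormD ((A - Om *m B) *m (x' - xs)) (cw phi x' - cw phi xs).
nra.
Qed.

End Main.

Lemma cvg_of_bound (R : realType) n (s : nat -> 'cV[R]_n) (xs : 'cV[R]_n) (K rho : R) :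
  0 <= rho < 1 -> (forall k, enorm (s k - xs) <= K * rho ^+ k) -> s @ \oo --> xs.
Proof.
move=> /andP [r0 r1] hb.
have hc : (fun k => K * rho ^+ k) @ \oo --> 0.
  rewrite -(mulr0 K); apply: cvgMr; apply: cvg_expr; rewrite ger0_norm //.
apply/cvgrPdist_le => eps ep.
move/cvgr0Pnorm_le: hc => /(_ eps ep); apply: filterS => k hk.
apply: le_trans _ (le_trans (ler_norm _) hk).
have -> : forall v : 'cV[R]_n, `|v| = mx_norm v by [].
rewrite mx_normrE; apply: bigmax_le => [|ij _]; first exact: le_trans (enorm_ge0 _) (hb k).
apply: le_trans (hb k); rewrite -enormN opprB.
by case: ij => i j /=; rewrite (ord1 j); exact: coord_le.
Qed.

Theorem theorem3p1 (R : realType) (n : nat) (A B Om M N : 'M[R]_n)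
  (phi psi : R -> R) (L1 L2 tau : R) (xstar : 'cV[R]_n) :
  is_diag_mx Om -> (forall i, 0 < Om i i) ->
  0 < L1 -> 0 < L2 ->
  (forall u v : 'cV[R]_n, enorm (cw phi u - cw phi v) <= L1 * enorm (u - v)) ->
  (forall u v : 'cV[R]_n, enorm (cw psi u - cw psi v) <= L2 * enorm (u - v)) ->
  A + Om *m B = M - N -> M \in unitmx ->
  vncp_sol A B phi psi xstar ->
  let alpha := opnorm (invmx M) in
  let beta := opnorm N + L1 + L2 * opnorm Om in
  let gamma := opnorm (A - Om *m B) + L1 + L2 * opnorm Om in
  alpha * (beta + gamma) < 1 ->
  0 < tau -> tau < 2 * (1 - alpha * beta) / (1 - alpha * beta + alpha * gamma) ->
  (forall x0 y0 : 'cV[R]_n,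
     (fun k => (fpi_seq A B Om M N phi psi tau x0 y0 k).1) @ \oo --> xstar) /\
  (forall x : 'cV[R]_n, vncp_sol A B phi psi x -> x = xstar).
Proof.
move=> hd hp hL1 hL2 hphi hpsi hsplit hM hsol alpha beta gamma hab ht0 ht1.
have a0 : 0 <= alpha := opnorm_ge0 _.
have b0 : 0 <= beta.
  have := opnorm_ge0 N; have := opnorm_ge0 Om => h1 h2.
  have := mulr_ge0 (ltW hL2) h1; rewrite /beta; lra.
have g0 : 0 <= gamma.
  have := opnorm_ge0 (A - Om *m B); have := opnorm_ge0 Om => h1 h2.
  have := mulr_ge0 (ltW hL2) h1; rewrite /gamma; lra.
have ab0 : 0 <= alpha * beta := mulr_ge0 a0 b0.
have ag0 : 0 <= alpha * gamma := mulr_ge0 a0 g0.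
have hab' : alpha * beta + alpha * gamma < 1 by rewrite -mulrDr.
have den : 0 < 1 - alpha * beta + alpha * gamma by lra.
have ht2 : tau * (1 - alpha * beta + alpha * gamma) < 2 * (1 - alpha * beta).
  by rewrite -ltr_pdivlMr.
set step := fpi_step A B Om M N phi psi tau.
have conv : forall x0 y0 : 'cV[R]_n,
    (fun k => (fpi_seq A B Om M N phi psi tau x0 y0 k).1) @ \oo --> xstar.
  move=> x0 y0.
  set ys := vabs (@gm _ _ A B Om phi psi xstar).
  have hf : step (xstar, ys) = (xstar, ys) := @fix_step _ _ A B Om M N phi psi tau hd hp hsplit hM _ hsol.
  set a := fun k => enorm ((fpi_seq A B Om M N phi psi tau x0 y0 k).1 - xstar).
  set b := fun k => enorm ((fpi_seq A B Om M N phi psi tau x0 y0 k).2 - ys).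
  have hS : forall k, fpi_seq A B Om M N phi psi tau x0 y0 k.+1 =
                      step (fpi_seq A B Om M N phi psi tau x0 y0 k) by [].
  have ha : forall k, a k.+1 <= (alpha * beta) * a k + alpha * b k.
    move=> k; rewrite /a /b hS.
    have := @est1 _ _ A B Om M N phi psi L1 L2 tau hphi hpsi xstar ys (fpi_seq A B Om M N phi psi tau x0 y0 k).1
      (fpi_seq A B Om M N phi psi tau x0 y0 k).2 hf.
    by rewrite -surjective_pairing -/alpha -/beta mulrDr mulrA.
  have hb : forall k, b k.+1 <= `|1 - tau| * b k + (tau * gamma) * a k.+1.
    move=> k; rewrite /a /b hS.
    have := @est2 _ _ A B Om M N phi psi L1 L2 tau hphi hpsi ht0 xstar ys (fpi_seq A B Om M N phi psi tau x0 y0 k).1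
      (fpi_seq A B Om M N phi psi tau x0 y0 k).2 hf.
    by rewrite -surjective_pairing -/gamma mulrA.
  have tg0 : 0 <= tau * gamma := mulr_ge0 (ltW ht0) g0.
  have [h22 hD] : 0 < 1 - (`|1 - tau| + tau * gamma * alpha) /\
      0 < (1 - alpha * beta) * (1 - (`|1 - tau| + tau * gamma * alpha))
          - alpha * (tau * gamma * (alpha * beta)).
    have [t1|t1] := lerP tau 1.
      have e1 : 1 - (1 - tau + tau * gamma * alpha) = tau * (1 - alpha * gamma) by ring.
      have e2 : (1 - alpha * beta) * (1 - (1 - tau + tau * gamma * alpha))
          - alpha * (tau * gamma * (alpha * beta)) =
          tau * (1 - alpha * beta - alpha * gamma) by ring.
      rewrite e2 e1; split; apply: mulr_gt0 => //; lra.
    have e2 : (1 - alpha * beta) * (1 - (tau - 1 + tau * gamma * alpha))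
          - alpha * (tau * gamma * (alpha * beta)) =
          2 * (1 - alpha * beta) - tau * (1 - alpha * beta + alpha * gamma) by ring.
    have hD : 0 < (1 - alpha * beta) * (1 - (tau - 1 + tau * gamma * alpha))
          - alpha * (tau * gamma * (alpha * beta)) by rewrite e2; lra.
    split => //.
    have := mulr_ge0 a0 (mulr_ge0 tg0 ab0).
    have hw : 0 < 1 - alpha * beta by lra.
    set w := 1 - (tau - 1 + tau * gamma * alpha) in hD *; move=> hh.
    have : 0 < (1 - alpha * beta) * w by lra.
    by rewrite pmulr_rgt0.
  have [K [rho [hr hk]]] := @my_contraction _ a b _ _ _ _
    (fun k => enorm_ge0 _) (fun k => enorm_ge0 _) ab0 a0 (normr_ge0 _) tg0 h22 hD ha hb.
  exact: cvg_of_bound hr hk.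
split => // x hx.
set yx := vabs (@gm _ _ A B Om phi psi x).
have hf : step (x, yx) = (x, yx) := @fix_step _ _ A B Om M N phi psi tau hd hp hsplit hM _ hx.
have h := conv x yx.
have ec : (fun k => (fpi_seq A B Om M N phi psi tau x yx k).1) = (fun _ => x).
  by apply: funext => k; rewrite /fpi_seq iter_fix.
rewrite ec in h.
exact: (@cvg_unique _ _ ((fun _ : nat => x) @ \oo) _ x xstar (cvg_cst x) h).
Qed.
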